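(* Let $M$ be a Riemannian manifold with retraction $R$, and let $f:M\to\mathbb{R}$ be smooth and bounded below. Suppose there exists $L>0$ such that \[ \bigl|\mathrm{D}(f\circ R_x)(t\eta)[\eta]-\mathrm{D}(f\circ R_x)(0_x)[\eta]\bigr|\le Lt\quad\text{for all } x\in M,\ \eta\in T_xM,\ \|\eta\|_x=1,\ t\ge 0. \] Let $(x_k)$ be a sequence generated by the scaled Fletcher–Reeves conjugate gradient method described in the context (with $0<c_1<c_2<1/2$). Then \[ \liminf_{k\to\infty}\|\operatorname{grad} f(x_k)\|_{x_k}=0. \]
   Context: A retraction on $M$ is a smooth map $R:TM\to M$ with $R_x(0_x)=x$ and $\mathrm{D}R_x(0_x)=\mathrm{id}_{T_xM}$, where $R_x=R|_{T_xM}$. The differentiated retraction is $\mathcal{T}^R_{\eta}(\xi):=\mathrm{D}R_x(\eta)[\xi]\in T_{R_x(\eta)}M$ for $\eta,\xi\in T_xM$. The associated scaled vector transport is $\mathcal{T}^0_{\eta}(\xi):=\dfrac{\|\xi\|_x}{\|\mathcal{T}^R_\eta(\xi)\|_{R_x(\eta)}}\mathcal{T}^R_\eta(\xi)$. Strong Wolfe conditions for $\alpha_k>0$ at $(x_k,\eta_k)$ with constants $c_1,c_2$: $f(R_{x_k}(\alpha_k\eta_k))\le f(x_k)+c_1\alpha_k\langle \operatorname{grad} f(x_k),\eta_k\rangle_{x_k}$ and $|\langle \operatorname{grad} f(R_{x_k}(\alpha_k\eta_k)),\mathcal{T}^R_{\alpha_k\eta_k}(\eta_k)\rangle_{R_{x_k}(\alpha_k\eta_k)}|\le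 c_2|\langle \operatorname{grad} f(x_k),\eta_k\rangle_{x_k}|$. Scaled Fletcher–Reeves method: choose $x_0\in M$, set $\eta_0=-\operatorname{grad} f(x_0)$; for $k=0,1,2,\dots$: choose $\alpha_k>0$ satisfying the strong Wolfe conditions with $0<c_1<c_2<1/2$, set $x_{k+1}=R_{x_k}(\alpha_k\eta_k)$, $\beta_{k+1}=\|\operatorname{grad} f(x_{k+1})\|^2_{x_{k+1}}/\|\operatorname{grad} f(x_k)\|^2_{x_k}$, and $\eta_{k+1}=-\operatorname{grad} f(x_{k+1})+\beta_{k+1}\mathcal{T}^{(k)}_{\alpha_k\eta_k}(\eta_k)$, where $\mathcal{T}^{(k)}_{\alpha_k\eta_k}(\eta_k)=\mathcal{T}^R_{\alpha_k\eta_k}(\eta_k)$ if $\|\mathcal{T}^R_{\alpha_k\eta_k}(\eta_k)\|_{x_{k+1}}\le\|\eta_k\|_{x_k}$, and $\mathcal{T}^{(k)}_{\alpha_k\eta_k}(\eta_k)=\mathcal{T}^0_{\alpha_k\eta_k}(\eta_k)$ otherwise. (If $\operatorname{grad} f(x_{k_0})=0$ at some first index $k_0$, then $\eta_{k_0}=0$ and the iterates stay at $x_{k_0}$.) *)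

(* Defs.v *)
From mathcomp Require Import all_boot all_order all_algebra.
From mathcomp Require Import all_classical all_reals all_analysis.
Unset Printing Implicit Defensive.
Import Order.TTheory GRing.Theory Num.Theory.
Local Open Scope ring_scope.

Section RiemRetr.
Variable R : realType.
(* M : points; T x : tangent space T_xM (a real vector space);
   g x : Riemannian metric <.,.>_x on T_xM;
   Rt x : the retraction R_x : T_xM -> M;
   DR x eta xi : the differentiated retraction  D R_x(eta)[xi] in T_{R_x(eta)}M;
   f : the cost function; grad x : Riemannian gradient grad f(x). *)
Variables (M : Type) (T : M -> lmodType R) (g : forall x, T x -> T x -> R)
  (Rt : forall x, T x -> M) (DR : forall x (eta : T x), T x -> T (Rt x eta))
  (f : M -> R) (grad : forall x, T x).

Definition is_metric : Prop :=
  forall x, [/\ forall u v : T x, g x u v = g x v u,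
     forall (a : R) (u v w : T x), g x (a *: u + v) w = a * g x u w + g x v w
   & forall u : T x, u != 0 -> 0 < g x u u].

Definition tnorm x (v : T x) : R := Num.sqrt (g x v v).

Definition is_retraction : Prop :=
  (forall x, Rt x 0 = x) /\
  (forall x (eta : T x) (a : R) (u v : T x),
      DR x eta (a *: u + v) = a *: DR x eta u + DR x eta v).

Definition DfR x (eta xi : T x) : R :=
  derive1 (fun s : R => f (Rt x (eta + s *: xi))) 0.

(* chain rule / definition of the Riemannian gradient through the retraction:
   f o R_x is differentiable, with
   D(f o R_x)(eta)[xi] = <grad f(R_x eta), D R_x(eta)[xi]>_{R_x eta}
   and (using R_x(0)=x, D R_x(0) = id) D(f o R_x)(0)[xi] = <grad f(x), xi>_x. *)
Definition grad_chain_rule : Prop :=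
  (forall x (eta xi : T x),
     is_derive (0 : R) (1 : R) (fun s : R => f (Rt x (eta + s *: xi)))
       (g (Rt x eta) (grad (Rt x eta)) (DR x eta xi))) /\
  (forall x (xi : T x),
     is_derive (0 : R) (1 : R) (fun s : R => f (Rt x (s *: xi))) (g x (grad x) xi)).

Definition strong_wolfe (c1 c2 : R) x (eta : T x) (a : R) : Prop :=
  f (Rt x (a *: eta)) <= f x + c1 * a * g x (grad x) eta /\
  `| g (Rt x (a *: eta)) (grad (Rt x (a *: eta))) (DR x (a *: eta) eta) | <= c2 * `| g x (grad x) eta |.

Definition sfr_step x (eta : T x) (a : R) : {y : M & T y} :=
  let y := Rt x (a *: eta) in
  let tr : T y := DR x (a *: eta) eta in
  let beta := tnorm y (grad y) ^+ 2 / tnorm x (grad x) ^+ 2 in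
  let tk := if tnorm y tr <= tnorm x eta then tr
            else (tnorm x eta / tnorm y tr) *: tr in
  existT (fun y => T y) y (- grad y + beta *: tk).

End RiemRetr.

(* Main.v *)
Require Import Defs.
From mathcomp Require Import all_boot all_order all_algebra.
From mathcomp Require Import all_classical all_reals all_analysis.
From mathcomp Require Import ring lra.
Import Order.TTheory GRing.Theory Num.Theory.
Local Open Scope ring_scope.


Lemma liminf0 {R : realType} (v : nat -> R) : (forall k, 0 <= v k) ->
  (forall e, 0 < e -> forall K, exists2 k, (K <= k)%N & v k <= e) ->
  limn_einf (fun k => (v k)%:E) = 0%E.
Proof.
move=> v0 hv; rewrite limn_einf_lim.
have -> : einfs (fun k => (v k)%:E) = fun=> 0%E.
  apply/funext => n; apply/eqP; rewrite eq_le; apply/andP; split.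
    apply/lee_addgt0Pr => e e0; rewrite add0e.
    have [k nk vk] := hv e e0 n.
    apply: (le_trans (ereal_inf_lbound _)); first by exists k.
    by rewrite lee_fin.
  by apply: le_ereal_inf_tmp => _ [k _ <-]; rewrite lee_fin.
by rewrite lim_cst.
Qed.

Lemma harm_half {R : realType} n : (0 < n)%N ->
  2^-1 <= \sum_(n <= i < n.*2) (i.+1%:R : R)^-1.
Proof.
case: n => // n _.
rewrite (@le_trans _ _ (\sum_(n.+1 <= i < n.+1.*2) n.+1.*2%:R^-1)) //=.
  rewrite sumr_const_nat -addnn addnK addnn -mul2n natrM invfM.
  by rewrite -[_ *+ n.+1]mulr_natr divfK.
by apply: ler_sum_nat => i /andP[? ?]; rewrite lef_pV2 ?qualifE/= ?ler_nat.
Qed.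

Lemma harm_big {R : realType} m :
  m%:R / 2 <= \sum_(0 <= i < 2 ^ m) (i.+1%:R : R)^-1.
Proof.
elim: m => [|m IH]; first by rewrite mul0r sumr_ge0.
rewrite (big_cat_nat (n := 2 ^ m)) //=; last by rewrite expnS leq_pmull.
have -> : (2 ^ m.+1 = (2 ^ m).*2)%N by rewrite expnS mul2n.
have h2 : (0 < 2 ^ m)%N by rewrite expn_gt0.
have := @harm_half R _ h2; rewrite -[m.+1]addn1 natrD.
move: IH; lra.
Qed.

Lemma harm_unb {R : realType} (B : R) : exists n, B < \sum_(0 <= i < n) (i.+1%:R : R)^-1.
Proof.
exists (2 ^ (Num.trunc (2 * B)).+1)%N.
apply: lt_le_trans (harm_big _).
have h := truncnS_gt (2 * B).
case: (lerP 0 B) => hB; last first.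
  by apply: lt_le_trans hB _; rewrite divr_ge0.
by rewrite ltr_pdivlMr //; lra.
Qed.

Section Main.
Variables (R : realType) (M : Type) (T : M -> lmodType R)
  (g : forall x, T x -> T x -> R) (Rt : forall x, T x -> M)
  (DR : forall x (eta : T x), T x -> T (Rt x eta))
  (f : M -> R) (grad : forall x, T x).
Hypothesis Hmetric : is_metric R M T g.
Hypothesis Hretr : is_retraction R M T Rt DR.
Hypothesis Hgrad : grad_chain_rule R M T g Rt DR f grad.

Local Notation tn := (tnorm R M T g).

Lemma gD1 {x} a (u v w : T x) : g x (a *: u + v) w = a * g x u w + g x v w.
Proof. by have [_ h _] := Hmetric x; apply: h. Qed.
Lemma gsym {x} (u v : T x) : g x u v = g x v u.
Proof. by have [h _ _] := Hmetric x; apply: h. Qed.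
Lemma g0l {x} (w : T x) : g x 0 w = 0.
Proof. have := gD1 1 0 0 w; rewrite scale1r addr0 mul1r => h; lra. Qed.
Lemma gZl {x} a (u w : T x) : g x (a *: u) w = a * g x u w.
Proof. by have := gD1 a u 0 w; rewrite addr0 g0l addr0. Qed.
Lemma gDl {x} (u v w : T x) : g x (u + v) w = g x u w + g x v w.
Proof. by have := gD1 1 u v w; rewrite scale1r mul1r. Qed.
Lemma gNl {x} (u w : T x) : g x (- u) w = - g x u w.
Proof. by rewrite -scaleN1r gZl mulN1r. Qed.
Lemma gZr {x} a (u w : T x) : g x w (a *: u) = a * g x w u.
Proof. by rewrite gsym gZl gsym. Qed.
Lemma gDr {x} (u v w : T x) : g x w (u + v) = g x w u + g x w v.
Proof. by rewrite gsym gDl !(gsym _ w). Qed.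
Lemma gNr {x} (u w : T x) : g x w (- u) = - g x w u.
Proof. by rewrite gsym gNl gsym. Qed.
Lemma g0r {x} (w : T x) : g x w 0 = 0.
Proof. by rewrite gsym g0l. Qed.
Lemma gge0 {x} (v : T x) : 0 <= g x v v.
Proof.
have [/eqP->|nz] := boolP (v == 0); first by rewrite g0l.
by have [_ _ h] := Hmetric x; apply/ltW/h.
Qed.
Lemma geq0 {x} (v : T x) : g x v v = 0 -> v = 0.
Proof.
move=> h; apply/eqP; apply/negPn/negP => nz.
by have [_ _ h'] := Hmetric x; have := h' v nz; rewrite h ltxx.
Qed.
Lemma tn2 {x} (v : T x) : tn x v ^+ 2 = g x v v.
Proof. by rewrite /tnorm sqr_sqrtr // gge0. Qed.
Lemma tn_ge0 {x} (v : T x) : 0 <= tn x v.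
Proof. by rewrite /tnorm sqrtr_ge0. Qed.

Lemma DRZ {x} (eta : T x) a (u : T x) : DR x eta (a *: u) = a *: DR x eta u.
Proof.
have h0 : DR x eta 0 = 0.
  have := Hretr.2 x eta 1 0 0; rewrite !scale1r addr0 => h.
  by apply: (@addIr _ (DR x eta 0)); rewrite add0r -h.
by have := Hretr.2 x eta a u 0; rewrite addr0 h0 addr0.
Qed.
Lemma DRD {x} (eta : T x) (u v : T x) : DR x eta (u + v) = DR x eta u + DR x eta v.
Proof. by have := Hretr.2 x eta 1 u v; rewrite !scale1r. Qed.

Lemma DfR_eq {x} (eta xi : T x) :
  DfR R M T Rt f x eta xi = g (Rt x eta) (grad (Rt x eta)) (DR x eta xi).
Proof. by rewrite /DfR derive1E; apply: derive_val; apply: Hgrad.1. Qed.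
Lemma DfR0_eq {x} (xi : T x) : DfR R M T Rt f x 0 xi = g x (grad x) xi.
Proof.
rewrite /DfR; under eq_fun do rewrite add0r.
by rewrite derive1E; apply: derive_val; apply: Hgrad.2.
Qed.

Variable L : R.
Hypothesis HL : 0 < L.
Hypothesis HLip : forall x (eta : T x), tnorm R M T g x eta = 1 -> forall t : R, 0 <= t ->
     `| DfR R M T Rt f x (t *: eta) eta - DfR R M T Rt f x 0 eta | <= L * t.

Lemma lip {x} (eta : T x) a : eta != 0 -> 0 <= a ->
  `| g (Rt x (a *: eta)) (grad (Rt x (a *: eta))) (DR x (a *: eta) eta)
     - g x (grad x) eta | <= L * a * g x eta eta.
Proof.
move=> nz a0.
have gp : 0 < g x eta eta by have [_ _ h] := Hmetric x; apply: h.
set n := tn x eta.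
have n0 : 0 < n by rewrite /n /tnorm sqrtr_gt0.
have [u eu hu] : exists2 u, eta = n *: u & tn x u = 1.
  exists (n^-1 *: eta); first by rewrite scalerA divff ?scale1r ?gt_eqF.
  rewrite /tnorm gZl gZr -/(tn x eta) mulrA -expr2.
  have -> : g x eta eta = n ^+ 2 by rewrite tn2.
  by rewrite exprVn mulVf ?sqrtr1 // expf_neq0 // gt_eqF.
have := HLip x u hu (a * n) (mulr_ge0 a0 (ltW n0)).
have e1 : (a * n) *: u = a *: eta by rewrite eu scalerA.
rewrite e1 DfR_eq DfR0_eq => h.
have -> : DR x (a *: eta) eta = n *: DR x (a *: eta) u by have := DRZ (a *: eta) n u; rewrite -eu.
have -> : g x (grad x) eta = n * g x (grad x) u by rewrite eu gZr.
rewrite gZr -mulrBr normrM gtr0_norm //.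
have -> : g x eta eta = n ^+ 2 by rewrite tn2.
have := ler_wpM2l (ltW n0) h; lra.
Qed.

Lemma step_facts {x} (eta : T x) (a : R) :
  let y := Rt x (a *: eta) in
  let w := g y (grad y) (DR x (a *: eta) eta) in
  let G' := g y (grad y) (grad y) in
  let bt := G' / g x (grad x) (grad x) in
  exists2 tau, 0 <= tau <= 1 &
   g y (grad y) (projT2 (sfr_step R M T g Rt DR grad x eta a)) = - G' + bt * (tau * w) /\
   g y (projT2 (sfr_step R M T g Rt DR grad x eta a)) (projT2 (sfr_step R M T g Rt DR grad x eta a))
     <= G' - 2 * bt * (tau * w) + bt ^+ 2 * g x eta eta.
Proof.
move=> y w G' bt.
rewrite /sfr_step /= -/y.
set tr := DR x (a *: eta) eta.
have -> : tn y (grad y) ^+ 2 / tn x (grad x) ^+ 2 = bt by rewrite !tn2.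
have Hexp : forall tau, g y (- grad y + bt *: (tau *: tr)) (- grad y + bt *: (tau *: tr))
    = G' - 2 * bt * (tau * w) + bt ^+ 2 * (tau ^+ 2 * g y tr tr).
  move=> tau; rewrite !(gDl, gDr, gNl, gNr, gZl, gZr) (gsym tr (grad y)) -/w -/G'.
  by rewrite !expr2; ring.
case: ifP => hle.
- exists 1; first by rewrite lexx ler01.
  split; first by rewrite gDr gNr gZr -/w -/G' mul1r.
  have := Hexp 1; rewrite !scale1r => ->.
  rewrite expr1n mul1r mul1r lerD2l; apply: ler_wpM2l; first exact: sqr_ge0.
  rewrite -!tn2; have := tn_ge0 tr; move: hle; nra.
- have hlt : tn x eta < tn y tr by rewrite ltNge hle.
  have trp : 0 < tn y tr by apply: le_lt_trans hlt; apply: tn_ge0.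
  exists (tn x eta / tn y tr).
    rewrite divr_ge0 ?tn_ge0 //= ler_pdivrMr // mul1r; exact: ltW.
  split; first by rewrite gDr gNr !gZr -/w -/G'.
  have := Hexp (tn x eta / tn y tr) => ->.
  rewrite lerD2l; apply: ler_wpM2l; first exact: sqr_ge0.
  rewrite -!tn2 expr_div_n divfK // expf_neq0 // gt_eqF //.
Qed.

Variables (c1 c2 : R).
Hypothesis Hc : 0 < c1 /\ c1 < c2 /\ c2 < 1 / 2.
Variables (x0 : M) (s : nat -> {y : M & T y}) (alpha : nat -> R).
Hypothesis Hs0 : s 0%N = existT (fun y => T y) x0 (- grad x0).
Hypothesis Hpos : forall k, 0 < alpha k.
Hypothesis Hwolfe : forall k, strong_wolfe R M T g Rt DR f grad c1 c2 (projT1 (s k)) (projT2 (s k)) (alpha k).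
Hypothesis Hstep : forall k, s k.+1 = sfr_step R M T g Rt DR grad (projT1 (s k)) (projT2 (s k)) (alpha k).

Let X k := projT1 (s k).
Let E k : T (X k) := projT2 (s k).
Let G k := g (X k) (grad (X k)) (grad (X k)).
Let P k := g (X k) (grad (X k)) (E k).
Let N k := g (X k) (E k) (E k).
Let W k := g (Rt (X k) (alpha k *: E k)) (grad (Rt (X k) (alpha k *: E k)))
             (DR (X k) (alpha k *: E k) (E k)).

Lemma Xs k : X k.+1 = Rt (X k) (alpha k *: E k).
Proof. by rewrite /X (Hstep k). Qed.

Lemma step_k k : exists2 tau, 0 <= tau <= 1 &
   P k.+1 = - G k.+1 + G k.+1 / G k * (tau * W k) /\
   N k.+1 <= G k.+1 - 2 * (G k.+1 / G k) * (tau * W k) + (G k.+1 / G k) ^+ 2 * N k.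
Proof. rewrite /P /N /G /X /E (Hstep k) /=; exact: step_facts. Qed.

Lemma wolfe_k k : `| W k | <= c2 * `| P k |.
Proof. exact: (Hwolfe k).2. Qed.

Lemma armijo_k k : f (X k.+1) <= f (X k) + c1 * alpha k * P k.
Proof. rewrite Xs; exact: (Hwolfe k).1. Qed.

Lemma zero_step k : grad (X k) = 0 -> grad (X k.+1) = 0.
Proof.
have hE : grad (X k) = 0 -> E k = 0.
  rewrite /X /E; case: k => [|i].
    by rewrite Hs0 /= => ->; rewrite oppr0.
  rewrite (Hstep i) /= => ->.
  by rewrite /tnorm g0l sqrtr0 expr0n /= mul0r scale0r oppr0 addr0.
move=> h; move: (hE h); rewrite /X /E (Hstep k) /=.
move: (projT2 (s k)) => e ->; rewrite scaler0 Hretr.1.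
exact: h.
Qed.

Lemma Gpos k : grad (X k) != 0 -> 0 < G k.
Proof. by move=> h; have [_ _ ] := Hmetric (X k); apply. Qed.

Section NZ.
Hypothesis Hnz : forall k, grad (X k) != 0.

Lemma vbound k tau : 0 <= tau <= 1 ->
  (1 - c2) * `| G k.+1 / G k * (tau * W k) | <= c2 * G k.+1 ->
  True.
Proof. by []. Qed.

Lemma inv k : (1 - c2) * P k <= (2 * c2 - 1) * G k /\ (1 - c2) * `|P k| <= G k.
Proof.
have [hc1 [hc12 hc2]] := Hc.
elim: k => [|k [IH1 IH2]].
  have -> : P 0%N = - G 0%N by rewrite /P /G /X /E Hs0 /= gNr.
  have := gge0 (grad (X 0%N)); rewrite -/(G 0%N) normrN => h.
  rewrite ger0_norm //; split; nra.
have [tau /andP[t0 t1] [hP _]] := step_k k.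
have Gk := Gpos _ (Hnz k); have Gk' := Gpos _ (Hnz k.+1).
set bt := G k.+1 / G k.
have bt0 : 0 <= bt by rewrite /bt divr_ge0 // ltW.
have btG : bt * G k = G k.+1 by rewrite /bt divfK // gt_eqF.
have hv : (1 - c2) * `| bt * (tau * W k) | <= c2 * G k.+1.
  rewrite normrM (ger0_norm bt0) normrM (ger0_norm t0).
  have hw := wolfe_k k.
  have h1 : tau * `|W k| <= c2 * `|P k|.
    apply: le_trans hw; rewrite -[X in _ <= X]mul1r; apply: ler_wpM2r => //.
  have h2 : (1 - c2) * (tau * `|W k|) <= c2 * G k.
    nra.
  rewrite -btG; nra.
rewrite hP; set v := bt * (tau * W k) in hv *.
have := ler_norm v; have := lerNnormlW (lexx `|v|) => hv1 hv2.
have hn : `| - G k.+1 + v | <= G k.+1 + `|v|.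
  by apply: le_trans (ler_normD _ _) _; rewrite normrN ger0_norm // ltW.
have hc : 0 <= 1 - c2 by lra.
have := ler_wpM2l hc hn.
split; [nra | nra].
Qed.

Let C := (1 + c2) / (1 - c2).

Lemma urec k : N k.+1 / G k.+1 ^+ 2 <= N k / G k ^+ 2 + C / G k.+1.
Proof.
have [hc1 [hc12 hc2]] := Hc.
have [_ IH2] := inv k.
have [tau /andP[t0 t1] [_ hN]] := step_k k.
have Gk := Gpos _ (Hnz k); have Gk' := Gpos _ (Hnz k.+1).
set bt := G k.+1 / G k in hN *.
have bt0 : 0 <= bt by rewrite /bt divr_ge0 // ltW.
have btG : bt * G k = G k.+1 by rewrite /bt divfK // gt_eqF.
have hv : (1 - c2) * `| bt * (tau * W k) | <= c2 * G k.+1.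
  rewrite normrM (ger0_norm bt0) normrM (ger0_norm t0).
  have hw := wolfe_k k.
  have h1 : tau * `|W k| <= c2 * `|P k|.
    apply: le_trans hw; rewrite -[X in _ <= X]mul1r; apply: ler_wpM2r => //.
  have h2 : (1 - c2) * (tau * `|W k|) <= c2 * G k by nra.
  rewrite -btG; nra.
set v := bt * (tau * W k) in hv hN.
have hv2 : `|v| <= c2 * G k.+1 / (1 - c2) by rewrite ler_pdivlMr; lra.
have := ler_norm v => hv1.
have G2 : 0 < G k.+1 ^+ 2 by rewrite exprn_gt0.
rewrite ler_pdivrMr //.
have -> : (N k / G k ^+ 2 + C / G k.+1) * G k.+1 ^+ 2 = C * G k.+1 + bt ^+ 2 * N k.
  rewrite /C /bt; field; rewrite !gt_eqF //; lra.
have -> : C * G k.+1 = G k.+1 + 2 * (c2 * G k.+1 / (1 - c2)).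
  rewrite /C; field; lra.
have := lerNnormlW (lexx `|v|) => hv3.
rewrite -mulrA -/v in hN.
lra.
Qed.

Lemma Pneg k : P k < 0.
Proof.
have [hc1 [hc12 hc2]] := Hc.
have [IH1 _] := inv k; have Gk := Gpos _ (Hnz k); nra.
Qed.

Lemma Npos k : 0 < N k.
Proof.
have [_ _ h] := Hmetric (X k); apply: h; apply/negP => /eqP e0.
by have := Pneg k; rewrite /P e0 g0r ltxx.
Qed.

Let kap := c1 * (1 - c2) / L.

Lemma zstep k : kap * (P k ^+ 2 / N k) <= f (X k) - f (X k.+1).
Proof.
have [hc1 [hc12 hc2]] := Hc.
have Pn := Pneg k; have Np := Npos k; have ap := Hpos k.
have Enz : E k != 0 by apply/negP => /eqP e0; move: Pn; rewrite /P e0 g0r ltxx.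
have hl : `| W k - P k | <= L * alpha k * N k := lip _ _ Enz (ltW ap).
have hw := wolfe_k k.
have hA := armijo_k k.
have := ler_norm (W k - P k); have := lerNnormlW (lexx `|W k|).
rewrite (ltr0_norm Pn) in hw => h1 h2.
have ha : (1 - c2) * (- P k) / (L * N k) <= alpha k.
  rewrite ler_pdivrMr ?mulr_gt0 //; lra.
have -> : kap * (P k ^+ 2 / N k) = c1 * (- P k) * ((1 - c2) * (- P k) / (L * N k)).
  rewrite /kap; field; rewrite !gt_eqF //.
have := ler_wpM2l (_ : 0 <= c1 * (- P k)) ha.
have hp : 0 <= c1 * (- P k) by nra.
move=> /(_ hp); lra.
Qed.

Lemma tele K n : \sum_(0 <= j < n) kap * (P (K + j)%N ^+ 2 / N (K + j)%N) <= f (X K) - f (X (K + n)%N).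
Proof.
elim: n => [|n IH]; first by rewrite big_geq // addn0 subrr.
rewrite big_nat_recr //= addnS.
have := zstep (K + n); lra.
Qed.

Lemma nz_main (b : R) (hb : forall x, b <= f x) e : 0 < e ->
  forall K, exists2 k, (K <= k)%N & tn (X k) (grad (X k)) <= e.
Proof.
have [hc1 [hc12 hc2]] := Hc.
move=> e0 K; apply: contrapT => hno.
have hge : forall j, e ^+ 2 <= G (K + j)%N.
  move=> j; rewrite /G -tn2.
  have h : e < tn (X (K + j)%N) (grad (X (K + j)%N)).
    rewrite ltNge; apply/negP => h; apply: hno; exists (K + j)%N => //.
    exact: leq_addr.
  have := tn_ge0 (grad (X (K + j)%N)); nra.
set eps := e ^+ 2 in hge.
have ep : 0 < eps by rewrite exprn_gt0.
have C0 : 0 <= C by rewrite /C divr_ge0; lra.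
pose u j := N (K + j)%N / G (K + j)%N ^+ 2.
have Gp j := Gpos _ (Hnz (K + j)%N).
have up j : 0 < u j by rewrite /u divr_gt0 ?Npos // exprn_gt0.
have hu : forall j, u j <= u 0%N + j%:R * (C / eps).
  elim => [|j IH]; first by rewrite mul0r addr0.
  have := urec (K + j); rewrite -addnS -/(u j) -/(u j.+1) => h.
  have : C / G (K + j.+1)%N <= C / eps.
    rewrite ler_pdivrMr // mulrAC ler_pdivlMr //; apply: ler_wpM2l => //.
  have -> : j.+1%:R = j%:R + 1 :> R by rewrite -addn1 natrD.
  move: h IH; rewrite /u; lra.
set A := u 0%N + C / eps.
have Ce : 0 <= C / eps by rewrite divr_ge0 // ltW.
have A0 : 0 < A.
  by rewrite /A; have := up 0%N; lra.
have hua : forall j, u j <= A * j.+1%:R.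
  move=> j; apply: le_trans (hu j) _; rewrite /A.
  have -> : j.+1%:R = j%:R + 1 :> R by rewrite -addn1 natrD.
  have := mulr_ge0 (ltW (up 0%N)) (ler0n R j).
  have : 0 <= C / eps by rewrite divr_ge0 // ltW.
  nra.
set dl := (1 - 2 * c2) / (1 - c2).
have dl0 : 0 < dl by rewrite /dl divr_gt0; lra.
have kp : 0 < kap by rewrite /kap !mulr_gt0 ?invr_gt0 //; lra.
have ht : forall j, kap * (dl ^+ 2 / A) * (j.+1%:R)^-1 <= kap * (P (K + j)%N ^+ 2 / N (K + j)%N).
  move=> j; rewrite -mulrA; apply: ler_wpM2l; first exact: ltW.
  have Np := Npos (K + j)%N; have Gj := Gp j.
  have [IH1 _] := inv (K + j)%N.
  have hd : dl * G (K + j)%N <= - P (K + j)%N.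
    rewrite /dl mulrAC ler_pdivrMr; lra.
  have hd2 : dl ^+ 2 * G (K + j)%N ^+ 2 <= P (K + j)%N ^+ 2.
    have := mulr_ge0 (ltW dl0) (ltW Gj); nra.
  have jp : 0 < A * j.+1%:R by rewrite mulr_gt0.
  have -> : dl ^+ 2 / A * (j.+1%:R)^-1 = dl ^+ 2 / (A * j.+1%:R) by rewrite invfM mulrA.
  apply: (@le_trans _ _ (dl ^+ 2 / u j)).
    rewrite ler_pdivrMr // mulrAC ler_pdivlMr //; apply: ler_wpM2l => //.
    by rewrite sqr_ge0.
  have -> : dl ^+ 2 / u j = dl ^+ 2 * G (K + j)%N ^+ 2 / N (K + j)%N.
    rewrite /u; field; rewrite !gt_eqF //.
  apply: ler_wpM2r => //; rewrite invr_ge0; exact: ltW.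
have hs : forall n, kap * (dl ^+ 2 / A) * \sum_(0 <= j < n) (j.+1%:R : R)^-1 <= f (X K) - b.
  move=> n; rewrite mulr_sumr.
  apply: le_trans (ler_sum_nat (fun j _ => ht j)) _.
  apply: le_trans (tele K n) _; have := hb (X (K + n)%N); lra.
have cp : 0 < kap * (dl ^+ 2 / A) by rewrite mulr_gt0 // divr_gt0 // exprn_gt0.
have [n hn] := harm_unb ((f (X K) - b) / (kap * (dl ^+ 2 / A))).
move: hn; rewrite ltr_pdivrMr // => hn.
have := hs n; lra.
Qed.
End NZ. End Main.

Theorem mainTheorem4 (R : realType) (M : Type) (T : M -> lmodType R)
  (g : forall x, T x -> T x -> R) (Rt : forall x, T x -> M)
  (DR : forall x (eta : T x), T x -> T (Rt x eta))
  (f : M -> R) (grad : forall x, T x)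
  (Hmetric : is_metric R M T g) (Hretr : is_retraction R M T Rt DR)
  (Hgrad : grad_chain_rule R M T g Rt DR f grad)
  (Hbdd : exists b : R, forall x, b <= f x)
  (L : R) (HL : 0 < L)
  (HLip : forall x (eta : T x), tnorm R M T g x eta = 1 -> forall t : R, 0 <= t ->
     `| DfR R M T Rt f x (t *: eta) eta - DfR R M T Rt f x 0 eta | <= L * t)
  (c1 c2 : R) (Hc : 0 < c1 /\ c1 < c2 /\ c2 < 1 / 2)
  (x0 : M) (s : nat -> {y : M & T y}) (alpha : nat -> R)
  (Hs0 : s 0%N = existT (fun y => T y) x0 (- grad x0))
  (Hpos : forall k, 0 < alpha k)
  (Hwolfe : forall k, strong_wolfe R M T g Rt DR f grad c1 c2 (projT1 (s k)) (projT2 (s k)) (alpha k))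
  (Hstep : forall k, s k.+1 = sfr_step R M T g Rt DR grad (projT1 (s k)) (projT2 (s k)) (alpha k)) :
  limn_einf (fun k => (tnorm R M T g (projT1 (s k)) (grad (projT1 (s k))))%:E) = 0%E.
Proof.
have [b hb] := Hbdd.
apply: liminf0 => [k|e e0 K]; first by rewrite /tnorm sqrtr_ge0.
case: (pselect (exists k, grad (projT1 (s k)) = 0)) => [[k hk]|hnone].
  have hall : forall j, grad (projT1 (s (k + j)%N)) = 0.
    elim => [|j IH]; first by rewrite addn0.
    by rewrite addnS; exact: (zero_step _ _ _ _ _ _ _ Hmetric Hretr _ _ _ Hs0 Hstep (k + j)%N IH).
  exists (K + k)%N; first exact: leq_addr.
  by rewrite addnC hall /tnorm g0l ?sqrtr0 ?ltW //; apply: (Hmetric _).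
have Hnz : forall k, grad (projT1 (s k)) != 0.
  by move=> k; apply/eqP => h; apply: hnone; exists k.
exact: (nz_main _ _ _ _ _ _ _ _ Hmetric Hretr Hgrad _ HL HLip _ _ Hc _ _ _ Hs0 Hpos Hwolfe Hstep Hnz _ hb _ e0 K).
Qed.
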